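(* Let $G\in\Gamma$ be twin-free with $\|G\|<\frac1{15}(9+4\sqrt6)$ (the Schur norm of $\begin{bmatrix}1&1&0\\1&1&1\\0&1&0\end{bmatrix}$). Then (1) $G$ has no induced subgraph isomorphic to the bipartite graph with biadjacency matrix $\begin{bmatrix}1&1&0\\1&1&1\end{bmatrix}$; and (2) every vertex of $G$ has degree at most $3$.
   Context: $\Gamma$ is the collection of all bipartite graphs $G\subseteq R\times C$ with $|R|,|C|\in\{1,2,\dots\}\cup\{\aleph_0\}$; the biadjacency matrix $M(G)$ has $(i,j)$ entry $1$ iff $(r_i,c_j)$ is an edge. $\|G\|$ is the Schur norm $\|M(G)\|_\bullet=\sup\{\|M(G)\bullet X\|:\|X\|\le1\}$ (entrywise product, operator norm on $\ell^2$ spaces over $\mathbb F\in\{\mathbb R,\mathbb C\}$). Induced subgraphs are $G\cap(R_0\times C_0)$; isomorphisms of bipartite graphs may swap the two sides. Two vertices are twins if they have the same neighbour sets; twin-free means no two distinct vertices are twins. *)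

(* Defs.v *)
From mathcomp Require Import all_boot all_order all_algebra.
From mathcomp Require Import reals complex.
Import GRing.Theory Num.Theory.
Set Implicit Arguments. Unset Strict Implicit. Unset Printing Implicit Defensive.
Local Open Scope ring_scope.

(* A bipartite graph G ⊆ R × C with |R|,|C| ∈ {1,2,...} ∪ {ℵ0}.
   Row vertices are r_i, column vertices c_j; the size [Some k] means k.+1
   vertices (indices 0..k), [None] means ℵ0 vertices (all of nat).
   [bedge i j] says (r_i, c_j) is an edge (only meaningful on vertices). *)
Record bigraph := BiGraph {
  nrows : option nat;
  ncols : option nat;
  bedge : nat -> nat -> bool }.

Definition in_size (n : option nat) (i : nat) : bool :=
  if n is Some k then (i <= k)%N else true.

Definition is_row (G : bigraph) (i : nat) := in_size (nrows G) i.
Definition is_col (G : bigraph) (j : nat) := in_size (ncols G) j.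

Definition biadj (F : numFieldType) (G : bigraph) (i j : nat) : F :=
  (bedge G i j)%:R.

(* ||A|| <= c for the operator ℓ^2(C) -> ℓ^2(R) given by the (possibly
   infinite) matrix A indexed by P × Q: the bilinear form of A is bounded by
   c on (finitely supported) vectors of norm <= 1 (finitely supported vectors
   are dense in ℓ^2, so this is exactly the operator norm bound). *)
Definition opnorm_le (F : numFieldType) (P Q : pred nat)
    (A : nat -> nat -> F) (c : F) : Prop :=
  forall (s t : seq nat) (y x : nat -> F),
    uniq s -> uniq t -> all P s -> all Q t ->
    \sum_(i <- s) `|y i| ^+ 2 <= 1 ->
    \sum_(j <- t) `|x j| ^+ 2 <= 1 ->
    `|\sum_(i <- s) \sum_(j <- t) y i * A i j * x j| <= c.

Definition schur_le (F : numFieldType) (G : bigraph) (c : F) : Prop :=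
  forall X : nat -> nat -> F,
    opnorm_le (is_row G) (is_col G) X 1 ->
    opnorm_le (is_row G) (is_col G) (fun i j => biadj F G i j * X i j) c.

(* ||G||_• < b  (the supremum is < b iff it is <= some c < b). *)
Definition schur_lt (F : numFieldType) (G : bigraph) (b : F) : Prop :=
  exists2 c : F, c < b & schur_le G c.

Definition twin_free (G : bigraph) : Prop :=
  (forall i i', is_row G i -> is_row G i' -> i != i' ->
     exists j, is_col G j /\ bedge G i j != bedge G i' j) /\
  (forall j j', is_col G j -> is_col G j' -> j != j' ->
     exists i, is_row G i /\ bedge G i j != bedge G i j').

Definition H_mat (i : 'I_2) (j : 'I_3) : bool :=
  ~~ ((val i == 0%N) && (val j == 2%N)).

(* G has an induced subgraph isomorphic to H; isomorphisms may swap sides: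
   either H's rows go to row vertices of G and H's columns to column vertices,
   or H's rows go to column vertices and H's columns to row vertices. *)
Definition has_induced_H (G : bigraph) : Prop :=
  (exists (r : 'I_2 -> nat) (c : 'I_3 -> nat),
     [/\ injective r, injective c, (forall i, is_row G (r i)),
         (forall j, is_col G (c j)) &
         forall i j, bedge G (r i) (c j) = H_mat i j]) \/
  (exists (r : 'I_2 -> nat) (c : 'I_3 -> nat),
     [/\ injective r, injective c, (forall i, is_col G (r i)),
         (forall j, is_row G (c j)) &
         forall i j, bedge G (c j) (r i) = H_mat i j]).

(* Every vertex has degree at most d (degrees may a priori be infinite, so
   we bound the size of every finite set of neighbours). *)
Definition max_degree_le (G : bigraph) (d : nat) : Prop :=
  (forall i (s : seq nat), is_row G i -> uniq s ->
     all (fun j => is_col G j && bedge G i j) s -> (size s <= d)%N) /\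
  (forall j (s : seq nat), is_col G j -> uniq s ->
     all (fun i => is_row G i && bedge G i j) s -> (size s <= d)%N).

Definition c0 (R : realType) : R := (9 + 4 * Num.sqrt 6) / 15.
Definition c0C (R : realType) : R[i] := Complex (c0 R) 0.

(* Main.v *)
Require Import Defs.
From mathcomp Require Import all_boot all_order all_algebra.
From mathcomp Require Import reals complex.
From mathcomp Require Import ring lra.
Import Order.TTheory GRing.Theory Num.Theory.
Local Open Scope ring_scope.
Set Implicit Arguments. Unset Strict Implicit.

Definition gT (G : bigraph) : bigraph := BiGraph (ncols G) (nrows G) (fun i j => bedge G j i).

Lemma opnorm_T (F : numFieldType) (P Q : pred nat) (A : nat -> nat -> F) c :
  opnorm_le P Q A c -> opnorm_le Q P (fun i j => A j i) c.
Proof.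
move=> h s t y x us ut aps aqt hy hx.
have := h t s x y ut us aqt aps hx hy.
suff -> : \sum_(i <- s) \sum_(j <- t) y i * A j i * x j =
          \sum_(i <- t) \sum_(j <- s) x i * A i j * y j by [].
rewrite exchange_big /=; apply: eq_bigr => i _; apply: eq_bigr => j _.
ring.
Qed.

Lemma schur_le_T (F : numFieldType) (G : bigraph) (c : F) :
  schur_le G c -> schur_le (gT G) c.
Proof.
move=> h X hX.
have := opnorm_T (h _ (opnorm_T hX)).
by [].
Qed.

Lemma schur_lt_T (F : numFieldType) (G : bigraph) (c : F) :
  schur_lt G c -> schur_lt (gT G) c.
Proof. by case=> d hd hs; exists d => //; apply: schur_le_T. Qed.

Lemma twin_free_T G : twin_free G -> twin_free (gT G).
Proof. by case=> h1 h2; split. Qed.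

Definition M1 : seq (seq bool) :=
  [:: [:: true; true; false]; [:: true; true; true]; [:: false; true; false]].
Definition M2 : seq (seq bool) :=
  [:: [:: true; true; false]; [:: true; true; true]; [:: true; false; true]].
Definition M3 : seq (seq bool) :=
  [:: [:: true; true; true; true]; [:: true; false; false; false];
      [:: false; true; false; false]; [:: false; false; true; false]].

Definition has_pat (G : bigraph) m n (M : seq (seq bool)) :=
  exists rs cs : seq nat, [/\ size rs = m, size cs = n, uniq rs & uniq cs] /\
    [/\ all (is_row G) rs, all (is_col G) cs &
    forall i j, (i < m)%N -> (j < n)%N ->
      bedge G (nth 0%N rs i) (nth 0%N cs j) = nth false (nth [::] M i) j].

Lemma uniq3 (a b c : nat) : a != b -> a != c -> b != c -> uniq [:: a; b; c].
Proof. by rewrite /= !inE !negb_or => -> -> ->. Qed.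

Definition rowH (G : bigraph) :=
  exists (r : 'I_2 -> nat) (c : 'I_3 -> nat),
     [/\ injective r, injective c, (forall i, is_row G (r i)),
         (forall j, is_col G (c j)) &
         forall i j, bedge G (r i) (c j) = H_mat i j].

Lemma comb1 G : twin_free G -> rowH G -> has_pat G 3 3 M1 \/ has_pat G 3 3 M2.
Proof.
move=> [_ tfc] [r [c [ir ic hr hc hp]]].
have e00 : bedge G (r (@Ordinal 2 0 isT)) (c (@Ordinal 3 0 isT)) = true := hp _ _.
have e01 : bedge G (r (@Ordinal 2 0 isT)) (c (@Ordinal 3 1 isT)) = true := hp _ _.
have e02 : bedge G (r (@Ordinal 2 0 isT)) (c (@Ordinal 3 2 isT)) = false := hp _ _.
have e10 : bedge G (r (@Ordinal 2 1 isT)) (c (@Ordinal 3 0 isT)) = true := hp _ _.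
have e11 : bedge G (r (@Ordinal 2 1 isT)) (c (@Ordinal 3 1 isT)) = true := hp _ _.
have e12 : bedge G (r (@Ordinal 2 1 isT)) (c (@Ordinal 3 2 isT)) = true := hp _ _.
move: e00 e01 e02 e10 e11 e12.
set p0 := r (@Ordinal 2 0 isT); set p1 := r (@Ordinal 2 1 isT).
set q0 := c (@Ordinal 3 0 isT); set q1 := c (@Ordinal 3 1 isT); set q2 := c (@Ordinal 3 2 isT).
move=> e00 e01 e02 e10 e11 e12.
have np : p0 != p1 by apply/eqP => /ir /(congr1 val).
have n01 : q0 != q1 by apply/eqP => /ic /(congr1 val).
have n02 : q0 != q2 by apply/eqP => /ic /(congr1 val).
have n12 : q1 != q2 by apply/eqP => /ic /(congr1 val).
have [x [hx hd]] := tfc q0 q1 (hc _) (hc _) n01.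
have nx0 : p0 != x by apply/eqP => E; move: hd; rewrite -E e00 e01.
have nx1 : p1 != x by apply/eqP => E; move: hd; rewrite -E e10 e11.
have hp0 : is_row G p0 := hr _.
have hp1 : is_row G p1 := hr _.
have hq0 : is_col G q0 := hc _.
have hq1 : is_col G q1 := hc _.
have hq2 : is_col G q2 := hc _.
case E0 : (bedge G x q0); case E1 : (bedge G x q1); rewrite ?E0 ?E1 // in hd;
  case E2 : (bedge G x q2).
- right; exists [:: p0; p1; x], [:: q0; q1; q2]; split; split => //.
  + exact: uniq3.
  + exact: uniq3.
  + by rewrite /= hp0 hp1 hx.
  + by rewrite /= hq0 hq1 hq2.
  + by move=> [|[|[|i]]] [|[|[|j]]] //= _ _.
- left; exists [:: p0; p1; x], [:: q1; q0; q2]; split; split => //.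
  + exact: uniq3.
  + by apply: uniq3; rewrite // eq_sym.
  + by rewrite /= hp0 hp1 hx.
  + by rewrite /= hq0 hq1 hq2.
  + by move=> [|[|[|i]]] [|[|[|j]]] //= _ _.
- right; exists [:: p0; p1; x], [:: q1; q0; q2]; split; split => //.
  + exact: uniq3.
  + by apply: uniq3; rewrite // eq_sym.
  + by rewrite /= hp0 hp1 hx.
  + by rewrite /= hq0 hq1 hq2.
  + by move=> [|[|[|i]]] [|[|[|j]]] //= _ _.
- left; exists [:: p0; p1; x], [:: q0; q1; q2]; split; split => //.
  + exact: uniq3.
  + exact: uniq3.
  + by rewrite /= hp0 hp1 hx.
  + by rewrite /= hq0 hq1 hq2.
  + by move=> [|[|[|i]]] [|[|[|j]]] //= _ _.
Qed.

Lemma inj_nth' m (l : seq nat) : uniq l -> size l = m ->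
  injective (fun k : 'I_m => nth 0%N l k).
Proof.
move=> u sz k k' /eqP; rewrite nth_uniq ?sz ?ltn_ord //.
by move/eqP/val_inj.
Qed.

Lemma mkH G (x i0 a b f : nat) :
  x != i0 -> a != b -> a != f -> b != f ->
  is_row G x -> is_row G i0 -> is_col G a -> is_col G b -> is_col G f ->
  bedge G x a -> bedge G x b -> bedge G x f = false ->
  bedge G i0 a -> bedge G i0 b -> bedge G i0 f -> rowH G.
Proof.
move=> nxi nab naf nbf rx ri ca cb cf xa xb xf ia ib i_f.
exists (fun k : 'I_2 => nth 0%N [:: x; i0] k), (fun k : 'I_3 => nth 0%N [:: a; b; f] k).
split.
- by apply: inj_nth' => //=; rewrite inE nxi.
- by apply: inj_nth' => //; apply: uniq3.
- by case=> [[|[|k]] hk].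
- by case=> [[|[|[|k]]] hk].
- by case=> [[|[|k]] hk] [[|[|[|l]]] hl] //=; rewrite /H_mat /=.
Qed.

Lemma uniq4 (a b c d : nat) : a != b -> a != c -> a != d -> b != c -> b != d -> c != d ->
  uniq [:: a; b; c; d].
Proof. by rewrite /= !inE !negb_or => -> -> -> -> -> ->. Qed.

Lemma three_of_four (P : 'I_4 -> Prop) :
  (forall a b, a != b -> P a \/ P b) ->
  exists a1 a2 a3 a4 : 'I_4, uniq [:: a1; a2; a3; a4] /\ [/\ P a1, P a2 & P a3].
Proof.
move=> D.
pose o0 := @Ordinal 4 0 isT; pose o1 := @Ordinal 4 1 isT.
pose o2 := @Ordinal 4 2 isT; pose o3 := @Ordinal 4 3 isT.
case: (D o0 o1 isT) => h0.
- case: (D o2 o3 isT) => h2.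
  + case: (D o1 o3 isT) => h1.
    * by exists o0, o1, o2, o3.
    * by exists o0, o2, o3, o1.
  + case: (D o1 o2 isT) => h1.
    * by exists o0, o1, o3, o2.
    * by exists o0, o2, o3, o1.
- case: (D o2 o3 isT) => h2.
  + case: (D o0 o3 isT) => h1.
    * by exists o0, o1, o2, o3.
    * by exists o1, o2, o3, o0.
  + case: (D o0 o2 isT) => h1.
    * by exists o0, o1, o3, o2.
    * by exists o1, o2, o3, o0.
Qed.

Lemma comb2 G : twin_free G -> ~ rowH G -> ~ has_pat G 4 4 M3 ->
  forall i (s : seq nat), is_row G i -> uniq s ->
    all (fun j => is_col G j && bedge G i j) s -> (size s <= 3)%N.
Proof.
move=> [_ tfc] nH nB i s hi us hs; rewrite leqNgt; apply/negP => hsz.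
pose col (k : 'I_4) := nth 0%N s k.
have lt4 : forall k : 'I_4, (k < size s)%N by move=> k; apply: leq_trans (ltn_ord k) hsz.
have icol : injective col.
  by move=> k k' /eqP; rewrite /col nth_uniq ?lt4 // => /eqP/val_inj.
have ncol : forall k k', k != k' -> col k != col k'.
  by move=> k k' nk; apply: contra nk => /eqP/icol ->.
have hcol : forall k, is_col G (col k) && bedge G i (col k).
  by move=> k; apply: (allP hs); apply: mem_nth.
have cc : forall k, is_col G (col k) by move=> k; case/andP: (hcol k).
have ic : forall k, bedge G i (col k) by move=> k; case/andP: (hcol k).
pose P k := exists x, is_row G x /\ forall l : 'I_4, bedge G x (col l) = (l == k).
have sing : forall x (a b : 'I_4), is_row G x -> a != b -> bedge G x (col a) ->
    bedge G x (col b) = false -> P a.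
  move=> x a b hx nab ea eb; exists x; split=> // l.
  case: (eqVneq l a) => [->|nla]; first by rewrite ea.
  case: (eqVneq l b) => [->|nlb]; first by rewrite eb.
  case El : (bedge G x (col l)) => //; exfalso; apply: nH.
  apply: (@mkH G x i (col a) (col l) (col b)) => //.
  - by apply/eqP => E; move: eb; rewrite E ic.
  - by apply: ncol; rewrite eq_sym.
  - exact: ncol.
  - exact: ncol.
have D : forall a b : 'I_4, a != b -> P a \/ P b.
  move=> a b nab; have [x [hx hd]] := tfc (col a) (col b) (cc a) (cc b) (ncol _ _ nab).
  case Ea : (bedge G x (col a)); case Eb : (bedge G x (col b)); rewrite ?Ea ?Eb // in hd.
  + by left; apply: (sing x a b).
  + by right; apply: (sing x b a) => //; rewrite eq_sym.
have [a1 [a2 [a3 [a4 [ua [[x1 [hx1 s1]] [x2 [hx2 s2]] [x3 [hx3 s3]]]]]]]] := three_of_four D.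
move: ua; rewrite /= !inE !negb_or => /andP [/and3P [n12 n13 n14] /andP [/andP [n23 n24] /andP [n34 _]]].
have f12 : (a1 == a2) = false by apply/negbTE.
have f21 : (a2 == a1) = false by rewrite eq_sym; apply/negbTE.
have f13 : (a1 == a3) = false by apply/negbTE.
have f31 : (a3 == a1) = false by rewrite eq_sym; apply/negbTE.
have f14 : (a1 == a4) = false by apply/negbTE.
have f41 : (a4 == a1) = false by rewrite eq_sym; apply/negbTE.
have f23 : (a2 == a3) = false by apply/negbTE.
have f32 : (a3 == a2) = false by rewrite eq_sym; apply/negbTE.
have f24 : (a2 == a4) = false by apply/negbTE.
have f42 : (a4 == a2) = false by rewrite eq_sym; apply/negbTE.
have f34 : (a3 == a4) = false by apply/negbTE.
have f43 : (a4 == a3) = false by rewrite eq_sym; apply/negbTE.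
apply: nB; exists [:: i; x1; x2; x3], [:: col a1; col a2; col a3; col a4]; split; split => //.
- apply: uniq4.
  + by apply/eqP => E; move: (s1 a4); rewrite -E ic; rewrite ?f12 ?f13 ?f14 ?f23 ?f24 ?f34 ?f21 ?f31 ?f41 ?f32 ?f42 ?f43.
  + by apply/eqP => E; move: (s2 a4); rewrite -E ic; rewrite ?f12 ?f13 ?f14 ?f23 ?f24 ?f34 ?f21 ?f31 ?f41 ?f32 ?f42 ?f43.
  + by apply/eqP => E; move: (s3 a4); rewrite -E ic; rewrite ?f12 ?f13 ?f14 ?f23 ?f24 ?f34 ?f21 ?f31 ?f41 ?f32 ?f42 ?f43.
  + by apply/eqP => E; move: (s2 a1); rewrite -E ?s1 ?s2 ?s3 eqxx; rewrite ?f12 ?f13 ?f14 ?f23 ?f24 ?f34 ?f21 ?f31 ?f41 ?f32 ?f42 ?f43.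
  + by apply/eqP => E; move: (s3 a1); rewrite -E ?s1 ?s2 ?s3 eqxx; rewrite ?f12 ?f13 ?f14 ?f23 ?f24 ?f34 ?f21 ?f31 ?f41 ?f32 ?f42 ?f43.
  + by apply/eqP => E; move: (s3 a2); rewrite -E ?s1 ?s2 ?s3 eqxx; rewrite ?f12 ?f13 ?f14 ?f23 ?f24 ?f34 ?f21 ?f31 ?f41 ?f32 ?f42 ?f43.
- by apply: uniq4; apply: ncol.
- by rewrite /= hi hx1 hx2 hx3.
- by rewrite /= !cc.
- move=> [|[|[|[|ii]]]] [|[|[|[|jj]]]] //= _ _;
    rewrite ?ic ?s1 ?s2 ?s3 ?eqxx ?f12 ?f13 ?f14 ?f23 ?f24 ?f34 ?f21 ?f31 ?f41 ?f32 ?f42 ?f43 //.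
Qed.

Section Gen.
Variable R : realType.

Lemma sum_eq_seq (s : seq nat) (x : nat) (f : nat -> R) : uniq s ->
  \sum_(i <- s) (i == x)%:R * f i = (x \in s)%:R * f x.
Proof.
elim: s => [|y s IH] /=; first by rewrite big_nil mul0r.
case/andP=> ys us; rewrite big_cons IH // in_cons.
case: (eqVneq y x) => [<-|nyx] /=.
  by rewrite (negbTE ys) mul1r mul0r addr0.
by rewrite mul0r add0r.
Qed.

Lemma sum_ind_le1 m (ra : 'I_m -> nat) (i : nat) : injective ra ->
  \sum_k (i == ra k)%:R <= 1 :> R.
Proof.
move=> inj; case: (pickP (fun k => i == ra k)) => [k0 /eqP -> | none].
  rewrite (bigD1 k0) //= eqxx big1 ?addr0 // => k nk.
  by rewrite (inj_eq inj) eq_sym (negbTE nk).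
by rewrite big1 // => k _; rewrite none.
Qed.

Lemma sum_ind_ord m (ra : 'I_m -> nat) (k0 : 'I_m) (f : 'I_m -> R) : injective ra ->
  \sum_k (ra k0 == ra k)%:R * f k = f k0.
Proof.
move=> inj; rewrite (bigD1 k0) //= eqxx mul1r big1 ?addr0 // => k nk.
by rewrite (inj_eq inj) eq_sym (negbTE nk) mul0r.
Qed.

Definition Xn m n (ra : 'I_m -> nat) (cb : 'I_n -> nat) (Xm : 'I_m -> 'I_n -> R)
  (i j : nat) : R := \sum_k \sum_l (i == ra k)%:R * (j == cb l)%:R * Xm k l.

Lemma Xn_bilin m n (ra : 'I_m -> nat) (cb : 'I_n -> nat) (Xm : 'I_m -> 'I_n -> R)
  (s t : seq nat) (a b : nat -> R) :
  \sum_(i <- s) \sum_(j <- t) a i * Xn ra cb Xm i j * b j =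
  \sum_k \sum_l (\sum_(i <- s) (i == ra k)%:R * a i) * Xm k l *
                (\sum_(j <- t) (j == cb l)%:R * b j).
Proof.
transitivity (\sum_(i <- s) \sum_(j <- t) \sum_k \sum_l
   ((i == ra k)%:R * a i) * Xm k l * ((j == cb l)%:R * b j)).
  apply: eq_bigr => i _; apply: eq_bigr => j _.
  rewrite /Xn mulr_sumr mulr_suml; apply: eq_bigr => k _.
  rewrite mulr_sumr mulr_suml; apply: eq_bigr => l _; ring.
transitivity (\sum_k \sum_l \sum_(i <- s) \sum_(j <- t)
   ((i == ra k)%:R * a i) * Xm k l * ((j == cb l)%:R * b j)).
  under eq_bigr => i _ do rewrite exchange_big.
  rewrite exchange_big.
  under eq_bigr => k _ do under eq_bigr => i _ do rewrite exchange_big.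
  by under eq_bigr => k _ do rewrite exchange_big.
apply: eq_bigr => k _; apply: eq_bigr => l _.
rewrite -mulrA mulr_suml; apply: eq_bigr => i _.
rewrite !mulr_sumr; apply: eq_bigr => j _; ring.
Qed.

Lemma sumsq_le m (ra : 'I_m -> nat) (s : seq nat) (a : nat -> R) :
  injective ra -> uniq s ->
  \sum_k (\sum_(i <- s) (i == ra k)%:R * a i) ^+ 2 <= \sum_(i <- s) a i ^+ 2.
Proof.
move=> inj us.
have E : forall k, (\sum_(i <- s) (i == ra k)%:R * a i) ^+ 2 =
   \sum_(i <- s) (i == ra k)%:R * a i ^+ 2.
  move=> k; rewrite !sum_eq_seq //; case: (ra k \in s) => /=; ring.
under eq_bigr => k _ do rewrite E.
rewrite exchange_big /=; apply: ler_sum => i _.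
rewrite -mulr_suml -[X in _ <= X]mul1r; apply: ler_wpM2r; first exact: sqr_ge0.
exact: sum_ind_le1.
Qed.

Lemma RB m n (ra : 'I_m -> nat) (cb : 'I_n -> nat) (Xm : 'I_m -> 'I_n -> R)
  (s t : seq nat) (a b : nat -> R) :
  injective ra -> injective cb -> uniq s -> uniq t ->
  (forall (A : 'I_m -> R) (B : 'I_n -> R),
     2 * \sum_k \sum_l A k * Xm k l * B l <= \sum_k A k ^+ 2 + \sum_l B l ^+ 2) ->
  2 * \sum_(i <- s) \sum_(j <- t) a i * Xn ra cb Xm i j * b j <=
  \sum_(i <- s) a i ^+ 2 + \sum_(j <- t) b j ^+ 2.
Proof.
move=> ira icb us ut FH; rewrite Xn_bilin; apply: le_trans (FH _ _) _.
by apply: lerD; apply: sumsq_le.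
Qed.

Lemma sum_scal (s : seq nat) (c : R) (F : nat -> R) :
  \sum_(i <- s) c * F i = c * \sum_(i <- s) F i.
Proof. by rewrite mulr_sumr. Qed.

Lemma sq_le1 (z : R) : z ^+ 2 <= 1 -> `|z| <= 1.
Proof. move=> h; rewrite ler_norml; apply/andP; split; nra. Qed.

Lemma opR m n (ra : 'I_m -> nat) (cb : 'I_n -> nat) (Xm : 'I_m -> 'I_n -> R)
  (P Q : pred nat) :
  injective ra -> injective cb ->
  (forall (A : 'I_m -> R) (B : 'I_n -> R),
     2 * \sum_k \sum_l A k * Xm k l * B l <= \sum_k A k ^+ 2 + \sum_l B l ^+ 2) ->
  opnorm_le P Q (Xn ra cb Xm) 1.
Proof.
move=> ira icb FH s t y x us ut _ _ hy hx.
set z := \sum_(i <- s) _.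
have := RB (fun i => z * y i) x ira icb us ut FH.
have -> : \sum_(i <- s) \sum_(j <- t) z * y i * Xn ra cb Xm i j * x j = z * z.
  rewrite /z mulr_sumr; apply: eq_bigr => i _; rewrite mulr_sumr.
  by apply: eq_bigr => j _; rewrite !mulrA.
have -> : \sum_(i <- s) (z * y i) ^+ 2 = z ^+ 2 * \sum_(i <- s) y i ^+ 2.
  by rewrite mulr_sumr; apply: eq_bigr => i _; rewrite exprMn.
have hy' : \sum_(i <- s) y i ^+ 2 <= 1.
  by apply: le_trans hy; rewrite le_eqVlt; apply/orP; left; apply/eqP; apply: eq_bigr => i _; rewrite real_normK ?num_real.
have hx' : \sum_(j <- t) x j ^+ 2 <= 1.
  by apply: le_trans hx; rewrite le_eqVlt; apply/orP; left; apply/eqP; apply: eq_bigr => i _; rewrite real_normK ?num_real.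
move=> h; apply: sq_le1.
have z2 : 0 <= z ^+ 2 by apply: sqr_ge0.
have : z ^+ 2 * \sum_(i <- s) y i ^+ 2 <= z ^+ 2 by rewrite -[X in _ <= X]mulr1; apply: ler_wpM2l.
nra.
Qed.

Lemma ReD (x y : R[i]) : complex.Re (x + y) = complex.Re x + complex.Re y.
Proof. by case: x; case: y. Qed.
Lemma Re_sum (s : seq nat) (F : nat -> R[i]) :
  complex.Re (\sum_(i <- s) F i) = \sum_(i <- s) complex.Re (F i).
Proof.
elim: s => [|a s IH]; first by rewrite !big_nil.
by rewrite !big_cons ReD IH.
Qed.
Lemma ReM3 (u v : R[i]) (r : R) : complex.Re (u * Complex r 0 * v) =
  complex.Re u * r * complex.Re v + (- complex.Im u) * r * complex.Im v.
Proof. case: u => a b; case: v => c d /=. ring. Qed.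
Lemma normsqC (u : R[i]) : `|u| ^+ 2 = Complex (complex.Re u ^+ 2 + complex.Im u ^+ 2) 0.
Proof. by rewrite -add_Re2_Im2. Qed.
Lemma leC (a b : R) : (Complex a 0 <= Complex b 0) = (a <= b).
Proof. by rewrite lecR. Qed.
Lemma sumC (s : seq nat) (F : nat -> R) :
  \sum_(i <- s) Complex (F i) 0 = Complex (\sum_(i <- s) F i) 0.
Proof.
elim: s => [|a s IH]; first by rewrite !big_nil.
rewrite !big_cons IH; apply/eqP; rewrite eq_complex /= addr0 !eqxx //.
Qed.
Lemma sumsqC (s : seq nat) (y : nat -> R[i]) :
  \sum_(i <- s) `|y i| ^+ 2 <= 1 ->
  \sum_(i <- s) (complex.Re (y i) ^+ 2 + complex.Im (y i) ^+ 2) <= 1.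
Proof.
under eq_bigr => i _ do rewrite normsqC.
by rewrite sumC -leC.
Qed.

Lemma conj_mulC (z : R[i]) :
  complex.Re (Complex (complex.Re z) (- complex.Im z) * z) =
  complex.Re z ^+ 2 + complex.Im z ^+ 2.
Proof. case: z => a b /=; ring. Qed.
Lemma conj_mul2C (z u : R[i]) :
  complex.Re (Complex (complex.Re z) (- complex.Im z) * u) ^+ 2 +
  (- complex.Im (Complex (complex.Re z) (- complex.Im z) * u)) ^+ 2 =
  (complex.Re z ^+ 2 + complex.Im z ^+ 2) * (complex.Re u ^+ 2 + complex.Im u ^+ 2).
Proof. case: z => a b; case: u => c d /=; ring. Qed.

Lemma opC m n (ra : 'I_m -> nat) (cb : 'I_n -> nat) (Xm : 'I_m -> 'I_n -> R)
  (P Q : pred nat) :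
  injective ra -> injective cb ->
  (forall (A : 'I_m -> R) (B : 'I_n -> R),
     2 * \sum_k \sum_l A k * Xm k l * B l <= \sum_k A k ^+ 2 + \sum_l B l ^+ 2) ->
  opnorm_le (F := R[i]) P Q (fun i j => Complex (Xn ra cb Xm i j) 0) 1.
Proof.
move=> ira icb FH s t y x us ut _ _ hy hx.
set z := \sum_(i <- s) _.
set N := complex.Re z ^+ 2 + complex.Im z ^+ 2.
set w := Complex (complex.Re z) (- complex.Im z).
have hN : N = complex.Re (w * z) by rewrite /N /w conj_mulC.
have hwz : w * z = \sum_(i <- s) \sum_(j <- t) (w * y i) * Complex (Xn ra cb Xm i j) 0 * x j.
  rewrite /z mulr_sumr; apply: eq_bigr => i _; rewrite mulr_sumr.
  by apply: eq_bigr => j _; rewrite !mulrA.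
have hy' := sumsqC hy; have hx' := sumsqC hx.
have E1 := RB (fun i => complex.Re (w * y i)) (fun j => complex.Re (x j)) ira icb us ut FH.
have E2 := RB (fun i => - complex.Im (w * y i)) (fun j => complex.Im (x j)) ira icb us ut FH.
have hsum : N = \sum_(i <- s) \sum_(j <- t) complex.Re (w * y i) * Xn ra cb Xm i j * complex.Re (x j)
   + \sum_(i <- s) \sum_(j <- t) (- complex.Im (w * y i)) * Xn ra cb Xm i j * complex.Im (x j).
  rewrite hN hwz Re_sum -big_split /=; apply: eq_bigr => i _.
  by rewrite Re_sum -big_split /=; apply: eq_bigr => j _; rewrite ReM3.
have hwy : forall i, complex.Re (w * y i) ^+ 2 + (- complex.Im (w * y i)) ^+ 2 =
    N * (complex.Re (y i) ^+ 2 + complex.Im (y i) ^+ 2).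
  by move=> i; rewrite /N /w conj_mul2C.
have hS : \sum_(i <- s) complex.Re (w * y i) ^+ 2 + \sum_(i <- s) (- complex.Im (w * y i)) ^+ 2
   = N * \sum_(i <- s) (complex.Re (y i) ^+ 2 + complex.Im (y i) ^+ 2).
  by rewrite -big_split mulr_sumr; apply: eq_bigr => i _; rewrite /= hwy.
have N0 : 0 <= N by rewrite /N addr_ge0 // sqr_ge0.
have : N * \sum_(i <- s) (complex.Re (y i) ^+ 2 + complex.Im (y i) ^+ 2) <= N.
  by rewrite -[X in _ <= X]mulr1; apply: ler_wpM2l.
have hx2 : \sum_(j <- t) complex.Re (x j) ^+ 2 + \sum_(j <- t) complex.Im (x j) ^+ 2 <= 1.
  by rewrite -big_split.
move=> hle.
have hN1 : N <= 1 by lra.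
rewrite normc_def -/N -[1]/(Complex 1 0) leC.
by rewrite -sqrtr1 ler_sqrt.
Qed.

Lemma Xn_at m n (ra : 'I_m -> nat) (cb : 'I_n -> nat) (Xm : 'I_m -> 'I_n -> R) k l :
  injective ra -> injective cb -> Xn ra cb Xm (ra k) (cb l) = Xm k l.
Proof.
move=> ira icb; rewrite /Xn.
under eq_bigr => k' _ do under eq_bigr => l' _ do rewrite -mulrA.
under eq_bigr => k' _ do rewrite -mulr_sumr.
rewrite sum_ind_ord //.
by rewrite sum_ind_ord.
Qed.

Lemma mulC0 (a b : R) : Complex a 0 * Complex b 0 = Complex (a * b) 0.
Proof. by apply/eqP; rewrite eq_complex /= !mulr0 mul0r subr0 addr0 !eqxx. Qed.

Lemma natC (b : bool) : (b%:R : R[i]) = Complex (b%:R) 0.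
Proof. by case: b. Qed.

Lemma contra_core m n (G : bigraph) (ra : 'I_m -> nat) (cb : 'I_n -> nat)
  (Mp : 'I_m -> 'I_n -> bool) (ysq : 'I_m -> R) (xsq : 'I_n -> R)
  (T : 'I_m -> 'I_n -> R) :
  injective ra -> injective cb -> (forall k, is_row G (ra k)) ->
  (forall l, is_col G (cb l)) -> (forall k l, bedge G (ra k) (cb l) = Mp k l) ->
  (forall k, 0 < ysq k) -> (forall l, 0 < xsq l) ->
  \sum_k ysq k <= 1 -> \sum_l xsq l <= 1 ->
  (forall (a : 'I_m -> R) (b : 'I_n -> R),
     2 * \sum_k \sum_l a k * T k l * b l <=
     \sum_k ysq k * a k ^+ 2 + \sum_l xsq l * b l ^+ 2) ->
  0 <= \sum_k \sum_l (Mp k l)%:R * T k l ->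
  (forall c : R, schur_le G c -> \sum_k \sum_l (Mp k l)%:R * T k l <= c) /\
  (forall c : R[i], schur_le G c -> Complex (\sum_k \sum_l (Mp k l)%:R * T k l) 0 <= c).
Proof.
move=> ira icb hr hc hM yp xp sy sx FH' v0.
set v := \sum_k _.
pose y k := Num.sqrt (ysq k); pose x l := Num.sqrt (xsq l).
have yn0 : forall k, y k != 0 by move=> k; rewrite /y sqrtr_eq0 -ltNge.
have xn0 : forall l, x l != 0 by move=> l; rewrite /x sqrtr_eq0 -ltNge.
have y2 : forall k, y k ^+ 2 = ysq k by move=> k; rewrite sqr_sqrtr // ltW.
have x2 : forall l, x l ^+ 2 = xsq l by move=> l; rewrite sqr_sqrtr // ltW.
pose Xm k l := T k l / (y k * x l).
have FH : forall (A : 'I_m -> R) (B : 'I_n -> R),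
     2 * \sum_k \sum_l A k * Xm k l * B l <= \sum_k A k ^+ 2 + \sum_l B l ^+ 2.
  move=> A B; have := FH' (fun k => A k / y k) (fun l => B l / x l).
  have -> : \sum_k \sum_l A k / y k * T k l * (B l / x l) =
            \sum_k \sum_l A k * Xm k l * B l.
    apply: eq_bigr => k _; apply: eq_bigr => l _; rewrite /Xm.
    by field; apply/andP; split.
  have -> : \sum_k ysq k * (A k / y k) ^+ 2 = \sum_k A k ^+ 2.
    by apply: eq_bigr => k _; rewrite -y2; field.
  have -> : \sum_l xsq l * (B l / x l) ^+ 2 = \sum_l B l ^+ 2.
    by apply: eq_bigr => l _; rewrite -x2; field.
  done.
pose yn i := \sum_k (i == ra k)%:R * y k.
pose xn j := \sum_l (j == cb l)%:R * x l.
have ynE : forall k, yn (ra k) = y k by move=> k; rewrite /yn sum_ind_ord.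
have xnE : forall l, xn (cb l) = x l by move=> l; rewrite /xn sum_ind_ord.
pose s := map ra (index_enum 'I_m); pose t := map cb (index_enum 'I_n).
have us : uniq s by rewrite map_inj_uniq // index_enum_uniq.
have ut : uniq t by rewrite map_inj_uniq // index_enum_uniq.
have rs : all (is_row G) s by apply/allP => i /mapP [k _ ->].
have ct : all (is_col G) t by apply/allP => i /mapP [k _ ->].
have ys : \sum_(i <- s) yn i ^+ 2 <= 1.
  by rewrite big_map; under eq_bigr => k _ do rewrite ynE y2.
have xs : \sum_(j <- t) xn j ^+ 2 <= 1.
  by rewrite big_map; under eq_bigr => k _ do rewrite xnE x2.
have vE : \sum_(i <- s) \sum_(j <- t) yn i * ((bedge G i j)%:R * Xn ra cb Xm i j) * xn j = v.
  rewrite big_map; apply: eq_bigr => k _; rewrite big_map; apply: eq_bigr => l _.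
  rewrite ynE xnE Xn_at // hM /Xm; field; apply/andP; split; done.
split.
  move=> c sch.
  have := sch _ (opR (P := is_row G) (Q := is_col G) ira icb FH) s t yn xn us ut rs ct.
  rewrite /biadj.
  have h1 : \sum_(i <- s) `|yn i| ^+ 2 <= 1.
    by rewrite (eq_bigr (fun i => yn i ^+ 2)) // => i _; rewrite real_normK ?num_real.
  have h2 : \sum_(j <- t) `|xn j| ^+ 2 <= 1.
    by rewrite (eq_bigr (fun i => xn i ^+ 2)) // => i _; rewrite real_normK ?num_real.
  move=> /(_ h1 h2); rewrite vE; apply: le_trans; exact: ler_norm.
move=> c sch.
have := sch _ (opC (P := is_row G) (Q := is_col G) ira icb FH) s t
   (fun i => Complex (yn i) 0) (fun j => Complex (xn j) 0) us ut rs ct.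
have h1 : forall (s0 : seq nat) (f : nat -> R), \sum_(i <- s0) f i ^+ 2 <= 1 ->
   \sum_(i <- s0) `|Complex (f i) 0| ^+ 2 <= 1.
  move=> s0 f hf; under eq_bigr => i _ do rewrite normsqC /=.
  rewrite sumC -[1]/(Complex 1 0) leC.
  by under eq_bigr => i _ do rewrite expr0n /= addr0.
move=> /(_ (h1 _ _ ys) (h1 _ _ xs)).
have -> : \sum_(i <- s) \sum_(j <- t) Complex (yn i) 0 *
     (biadj R[i] G i j * Complex (Xn ra cb Xm i j) 0) * Complex (xn j) 0 =
   Complex v 0.
  rewrite -vE -sumC; apply: eq_bigr => i _; rewrite -sumC; apply: eq_bigr => j _.
  by rewrite /biadj natC !mulC0.
by rewrite ger0_norm // -[0]/(Complex 0 0) leC.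
Qed.

Lemma inj_nth m (l : seq nat) : uniq l -> size l = m ->
  injective (fun k : 'I_m => nth 0%N l k).
Proof.
move=> u sz k k' /eqP; rewrite nth_uniq ?sz ?ltn_ord //.
by move/eqP/val_inj.
Qed.

Lemma inst_contra m n (G : bigraph) (rs cs : seq nat) (Ml : seq (seq bool))
  (yl xl : seq R) (Tl : seq (seq R)) :
  size rs = m -> size cs = n -> uniq rs -> uniq cs ->
  all (is_row G) rs -> all (is_col G) cs ->
  (forall i j, (i < m)%N -> (j < n)%N ->
     bedge G (nth 0%N rs i) (nth 0%N cs j) = nth false (nth [::] Ml i) j) ->
  (forall k : 'I_m, 0 < nth 0 yl k) -> (forall l : 'I_n, 0 < nth 0 xl l) ->
  \sum_(k < m) nth 0 yl k <= 1 -> \sum_(l < n) nth 0 xl l <= 1 ->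
  (forall (a : 'I_m -> R) (b : 'I_n -> R),
     2 * \sum_(k < m) \sum_(l < n) a k * nth 0 (nth [::] Tl k) l * b l <=
     \sum_(k < m) nth 0 yl k * a k ^+ 2 + \sum_(l < n) nth 0 xl l * b l ^+ 2) ->
  c0 R <= \sum_(k < m) \sum_(l < n) (nth false (nth [::] Ml k) l)%:R * nth 0 (nth [::] Tl k) l ->
  (schur_lt (F := R) G (c0 R) \/ schur_lt (F := R[i]) G (c0C R)) -> False.
Proof.
move=> sr sc ur uc ar ac hM yp xp sy sx FH' hv hlt.
have c0p : 0 <= c0 R.
  rewrite /c0; apply: divr_ge0 => //; apply: addr_ge0 => //; apply: mulr_ge0 => //.
  exact: sqrtr_ge0.
have hr : forall k : 'I_m, is_row G (nth 0%N rs k).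
  by move=> k; apply: (allP ar); apply: mem_nth; rewrite sr.
have hc : forall k : 'I_n, is_col G (nth 0%N cs k).
  by move=> k; apply: (allP ac); apply: mem_nth; rewrite sc.
have [H1 H2] := @contra_core m n G (fun k => nth 0%N rs k) (fun l => nth 0%N cs l)
  (fun k l => nth false (nth [::] Ml k) l) (fun k => nth 0 yl k) (fun l => nth 0 xl l)
  (fun k l => nth 0 (nth [::] Tl k) l) (inj_nth ur sr) (inj_nth uc sc)
  hr hc
  (fun k l => hM k l (ltn_ord k) (ltn_ord l)) yp xp sy sx FH' (le_trans c0p hv).
case: hlt => [[c hlc sch]|[c hlc sch]].
  have := H1 c sch => h; have := le_lt_trans (le_trans hv h) hlc.
  by rewrite ltxx.
have := H2 c sch => h.
have hv' : Complex (c0 R) 0 <= Complex (\sum_(k < m) \sum_(l < n) (nth false (nth [::] Ml k) l)%:R * nth 0 (nth [::] Tl k) l) 0 by rewrite leC.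
have := lt_le_trans hlc (le_trans hv' h).
by rewrite ltxx.
Qed.

Lemma Pref (s a0 a1 a2 b0 b1 b2 : R) : s ^+ 2 = 6 -> 0 <= s -> s <= 3 ->
  2 * (a0 * (((6 + s)/30) - (6 - 2*s)*((6 + s)/30)^+2) * b0 + a0 * ((6 - 2*s)*((6 + s)/30)*((8 + 3*s)/30)) * b1 + a0 * (- (s*((6 + s)/30)*((16 - 4*s)/30))) * b2 + a1 * ((6 - 2*s)*((6 + s)/30)*((8 + 3*s)/30)) * b0 + a1 * (((8 + 3*s)/30) - (6 - 2*s)*((8 + 3*s)/30)^+2) * b1 + a1 * (s*((8 + 3*s)/30)*((16 - 4*s)/30)) * b2 + a2 * (- (s*((6 + s)/30)*((16 - 4*s)/30))) * b0 + a2 * (s*((8 + 3*s)/30)*((16 - 4*s)/30)) * b1 + a2 * (((16 - 4*s)/30) - (3 + s)*((16 - 4*s)/30)^+2) * b2) <=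
  ((6 + s)/30) * a0^+2 + ((8 + 3*s)/30) * a1^+2 + ((16 - 4*s)/30) * a2^+2 + ((6 + s)/30) * b0^+2 + ((8 + 3*s)/30) * b1^+2 + ((16 - 4*s)/30) * b2^+2.
Proof.
move=> hs s0 s3.
have E : (((6 + s)/30) * a0^+2 + ((8 + 3*s)/30) * a1^+2 + ((16 - 4*s)/30) * a2^+2 + ((6 + s)/30) * b0^+2 + ((8 + 3*s)/30) * b1^+2 + ((16 - 4*s)/30) * b2^+2) - (2 * (a0 * (((6 + s)/30) - (6 - 2*s)*((6 + s)/30)^+2) * b0 + a0 * ((6 - 2*s)*((6 + s)/30)*((8 + 3*s)/30)) * b1 + a0 * (- (s*((6 + s)/30)*((16 - 4*s)/30))) * b2 + a1 * ((6 - 2*s)*((6 + s)/30)*((8 + 3*s)/30)) * b0 + a1 * (((8 + 3*s)/30) - (6 - 2*s)*((8 + 3*s)/30)^+2) * b1 + a1 * (s*((8 + 3*s)/30)*((16 - 4*s)/30)) * b2 + a2 * (- (s*((6 + s)/30)*((16 - 4*s)/30))) * b0 + a2 * (s*((8 + 3*s)/30)*((16 - 4*s)/30)) * b1 + a2 * (((16 - 4*s)/30) - (3 + s)*((16 - 4*s)/30)^+2) * b2)) =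
  ((6 - 2*s)/2) * (- (((6 + s)/30)*(a0 + b0)) + ((8 + 3*s)/30)*(a1 + b1) - (1 + s/2)*((16 - 4*s)/30)*(a2 + b2))^+2 + ((6 - 2*s)/2 * ((6 + s)/30) * ((8 + 3*s)/30)) * ((-1)*(a1 - b1) - 1*(a0 - b0))^+2 + ((6 - 2*s)/2 * ((6 + s)/30) * ((16 - 4*s)/30)) * ((-1)*(a2 - b2) - (- (1 + s/2))*(a0 - b0))^+2 + ((6 - 2*s)/2 * ((8 + 3*s)/30) * ((16 - 4*s)/30)) * (1*(a2 - b2) - (- (1 + s/2))*(a1 - b1))^+2 + (s ^+ 2 - 6) * ((8/45)*b2^+2 + (4/45)*b1^+2 + (1/15)*b0^+2 - (16/225)*a2*b2 - (64/225)*a2*b1 + (16/75)*a2*b0 + (8/45)*a2^+2 - (64/225)*a1*b2 - (8/45)*a1*b1 + (4/45)*a1^+2 + (16/75)*a0*b2 - (2/15)*a0*b0 + (1/15)*a0^+2 + (2/225)*s*b2^+2 + (3/50)*s*b1^+2 + (7/225)*s*b0^+2 + (28/225)*s*a2*b2 - (8/225)*s*a2*b1 - (4/225)*s*a2*b0 + (2/225)*s*a2^+2 - (8/225)*s*a1*b2 - (3/25)*s*a1*b1 + (3/50)*s*a1^+2 - (4/225)*s*a0*b2 - (14/225)*s*a0*b0 + (7/225)*s*a0^+2 - (7/225)*s^+2*b2^+2 + (1/900)*s^+2*b1^+2 - (1/300)*s^+2*b0^+2 - (14/225)*s^+2*a2*b2 + (2/75)*s^+2*a2*b1 - (2/225)*s^+2*a2*b0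 - (7/225)*s^+2*a2^+2 + (2/75)*s^+2*a1*b2 - (1/450)*s^+2*a1*b1 + (1/900)*s^+2*a1^+2 - (2/225)*s^+2*a0*b2 + (1/150)*s^+2*a0*b0 - (1/300)*s^+2*a0^+2 + (1/225)*s^+3*b2^+2 - (1/300)*s^+3*b1^+2 - (1/900)*s^+3*b0^+2 + (2/225)*s^+3*a2*b2 + (1/225)*s^+3*a2^+2 + (1/150)*s^+3*a1*b1 - (1/300)*s^+3*a1^+2 + (1/450)*s^+3*a0*b0 - (1/900)*s^+3*a0^+2) by field.
rewrite hs subrr mul0r addr0 in E; rewrite -subr_ge0 E.
repeat apply: addr_ge0; (apply: mulr_ge0; last exact: sqr_ge0); repeat apply: mulr_ge0; lra.
Qed.

Definition Tref (s : R) : seq (seq R) :=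
  [:: [:: (((6 + s)/30) - (6 - 2*s)*((6 + s)/30)^+2); ((6 - 2*s)*((6 + s)/30)*((8 + 3*s)/30)); (- (s*((6 + s)/30)*((16 - 4*s)/30)))];
      [:: ((6 - 2*s)*((6 + s)/30)*((8 + 3*s)/30)); (((8 + 3*s)/30) - (6 - 2*s)*((8 + 3*s)/30)^+2); (s*((8 + 3*s)/30)*((16 - 4*s)/30))];
      [:: (- (s*((6 + s)/30)*((16 - 4*s)/30))); (s*((8 + 3*s)/30)*((16 - 4*s)/30)); (((16 - 4*s)/30) - (3 + s)*((16 - 4*s)/30)^+2)]].
Definition dref (s : R) : seq R := [:: ((6 + s)/30); ((8 + 3*s)/30); ((16 - 4*s)/30)].

Lemma P2 (a0 a1 a2 b0 b1 b2 : R) :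
  2 * (a0 * (((2*100+44)*100+65)/(10*100*100)) * b0 + a0 * (((1*100+22)*100+33)/(10*100*100)) * b1 + a0 * (- (((1*100+62)*100+82)/(10*100*100))) * b2 + a1 * ((61*100+16)/(10*100*100)) * b0 + a1 * (((2*100+44)*100+65)/(10*100*100)) * b1 + a1 * (((2*100+44)*100+22)/(10*100*100)) * b2 + a2 * (((2*100+44)*100+22)/(10*100*100)) * b0 + a2 * (- (((1*100+62)*100+82)/(10*100*100))) * b1 + a2 * (((1*100+21)*100+90)/(10*100*100)) * b2) <=
  ((2*100+86)/(10*100)) * a0^+2 + ((4*100+29)/(10*100)) * a1^+2 + ((2*100+85)/(10*100)) * a2^+2 + ((4*100+29)/(10*100)) * b0^+2 + ((2*100+86)/(10*100)) * b1^+2 + ((2*100+85)/(10*100)) * b2^+2.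
Proof.
have E : (((2*100+86)/(10*100)) * a0^+2 + ((4*100+29)/(10*100)) * a1^+2 + ((2*100+85)/(10*100)) * a2^+2 + ((4*100+29)/(10*100)) * b0^+2 + ((2*100+86)/(10*100)) * b1^+2 + ((2*100+85)/(10*100)) * b2^+2) - (2 * (a0 * (((2*100+44)*100+65)/(10*100*100)) * b0 + a0 * (((1*100+22)*100+33)/(10*100*100)) * b1 + a0 * (- (((1*100+62)*100+82)/(10*100*100))) * b2 + a1 * ((61*100+16)/(10*100*100)) * b0 + a1 * (((2*100+44)*100+65)/(10*100*100)) * b1 + a1 * (((2*100+44)*100+22)/(10*100*100)) * b2 + a2 * (((2*100+44)*100+22)/(10*100*100)) * b0 + a2 * (- (((1*100+62)*100+82)/(10*100*100))) * b1 + a2 * (((1*100+21)*100+90)/(10*100*100)) * b2)) =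
  (((1*100+43))%N%:R/((5*100))%N%:R) * (a0 + (- ((48*100+93)/(57*100+20))) * b0 + (- ((9*100+41)/(22*100))) * b1 + ((81*100+41)/((1*100+43)*100)) * b2)^+2 + (((4*100+29))%N%:R/((10*100))%N%:R) * (a1 + (- ((1*100+39)/(9*100+75))) * b0 + (- ((16*100+31)/(28*100+60))) * b1 + (- (((1*100+22)*100+11)/((2*100+14)*100+50))) * b2)^+2 + ((57)%N%:R/((2*100))%N%:R) * (a2 + (- (((1*100+22)*100+11)/((1*100+42)*100+50))) * b0 + ((81*100+41)/((1*100+42)*100+50)) * b1 + (- ((12*100+19)/(28*100+50))) * b2)^+2 + ((((((14*100+7)*100+89)*100+12)*100+11))%N%:R/((((((81*100+51)*100)*100)*100)*100))%N%:R) * (b0 + (((54*100+82)*100+19)/((((14*100+7)*100+89)*100+12)*100+11)) * b1 + ((((3*100+91)*100+56)*100+90)/((((14*100+7)*100+89)*100+12)*100+11)) * b2)^+2 + (((((((((68*100+75)*100+82)*100+6)*100+20)*100+31)*100+12)*100+13))%N%:R/((((((((((6*100+3)*100+98)*100+53)*100+29)*100+51)*100+90)*100)*100)*100))%N%:R) * (b1 + (((((((60*100+97)*100+55)*100+10)*100+99)*100+18)*100+22)/(((((((68*100+75)*100+82)*100+6)*100+20)*100+31)*100+12)*100+13)) * b2)^+2 + (((((((((((19*100+56)*100+94)*100+58)*100+46)*100+9)*100+78)*100+61)*100+14)*100+91))%N%:R/((((((((((((1*100+71)*100+89)*100+55)*100+15)*100+50)*100+77)*100+80)*100+32)*100+50)*100)*100))%N%:R)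 * (b2)^+2 by field.
rewrite -subr_ge0 E.
repeat apply: addr_ge0.
all: by apply: mulr_ge0; [apply: divr_ge0; exact: ler0n | exact: sqr_ge0].
Qed.

Definition T2 : seq (seq R) :=
  [:: [:: (((2*100+44)*100+65)/(10*100*100)); (((1*100+22)*100+33)/(10*100*100)); (- (((1*100+62)*100+82)/(10*100*100)))];
      [:: ((61*100+16)/(10*100*100)); (((2*100+44)*100+65)/(10*100*100)); (((2*100+44)*100+22)/(10*100*100))];
      [:: (((2*100+44)*100+22)/(10*100*100)); (- (((1*100+62)*100+82)/(10*100*100))); (((1*100+21)*100+90)/(10*100*100))]].
Definition y2 : seq R := [:: ((2*100+86)/(10*100)); ((4*100+29)/(10*100)); ((2*100+85)/(10*100))].
Definition x2 : seq R := [:: ((4*100+29)/(10*100)); ((2*100+86)/(10*100)); ((2*100+85)/(10*100))].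


Lemma P3 (a0 a1 a2 a3 b0 b1 b2 b3 : R) :
  2 * (a0 * (((2*100+8)*100+30)/(10*100*100)) * b0 + a0 * (((2*100+8)*100+30)/(10*100*100)) * b1 + a0 * (((2*100+8)*100+30)/(10*100*100)) * b2 + a0 * (((1*100+29)*100+28)/(10*100*100)) * b3 + a1 * (((1*100+67)*100+25)/(10*100*100)) * b0 + a1 * (- ((31*100+77)/(10*100*100))) * b1 + a1 * (- ((31*100+77)/(10*100*100))) * b2 + a1 * (- ((57*100+56)/(10*100*100))) * b3 + a2 * (- ((31*100+77)/(10*100*100))) * b0 + a2 * (((1*100+67)*100+25)/(10*100*100)) * b1 + a2 * (- ((31*100+77)/(10*100*100))) * b2 + a2 * (- ((57*100+56)/(10*100*100))) * b3 + a3 * (- ((31*100+89)/(10*100*100))) * b0 + a3 * (- ((31*100+89)/(10*100*100))) * b1 + a3 * (((1*100+67)*100+87)/(10*100*100)) * b2 + a3 * (- ((57*100+78)/(10*100*100))) * b3) <=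
  ((6*100)/(10*100)) * a0^+2 + ((1*100+33)/(10*100)) * a1^+2 + ((1*100+33)/(10*100)) * a2^+2 + ((1*100+34)/(10*100)) * a3^+2 + ((2*100+99)/(10*100)) * b0^+2 + ((2*100+99)/(10*100)) * b1^+2 + ((2*100+99)/(10*100)) * b2^+2 + ((1*100+3)/(10*100)) * b3^+2.
Proof.
have E : (((6*100)/(10*100)) * a0^+2 + ((1*100+33)/(10*100)) * a1^+2 + ((1*100+33)/(10*100)) * a2^+2 + ((1*100+34)/(10*100)) * a3^+2 + ((2*100+99)/(10*100)) * b0^+2 + ((2*100+99)/(10*100)) * b1^+2 + ((2*100+99)/(10*100)) * b2^+2 + ((1*100+3)/(10*100)) * b3^+2) - (2 * (a0 * (((2*100+8)*100+30)/(10*100*100)) * b0 + a0 * (((2*100+8)*100+30)/(10*100*100)) * b1 + a0 * (((2*100+8)*100+30)/(10*100*100)) * b2 + a0 * (((1*100+29)*100+28)/(10*100*100)) * b3 + a1 * (((1*100+67)*100+25)/(10*100*100)) * b0 + a1 * (- ((31*100+77)/(10*100*100))) * b1 + a1 * (- ((31*100+77)/(10*100*100))) * b2 + a1 * (- ((57*100+56)/(10*100*100))) * b3 + a2 * (- ((31*100+77)/(10*100*100))) * b0 + a2 * (((1*100+67)*100+25)/(10*100*100)) * b1 + a2 * (- ((31*100+77)/(10*100*100))) * b2 + a2 * (- ((57*100+56)/(10*100*100))) * b3 + a3 * (- ((31*100+89)/(10*100*100))) * b0 + a3 * (- ((31*100+89)/(10*100*100))) * b1 + a3 * (((1*100+67)*100+87)/(10*100*100))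 * b2 + a3 * (- ((57*100+78)/(10*100*100))) * b3)) =
  ((3)%N%:R/(5)%N%:R) * (a0 + (- ((20*100+83)/(60*100))) * b0 + (- ((20*100+83)/(60*100))) * b1 + (- ((20*100+83)/(60*100))) * b2 + (- ((4*100+4)/(18*100+75))) * b3)^+2 + (((1*100+33))%N%:R/((10*100))%N%:R) * (a1 + (- ((6*100+69)/(5*100+32))) * b0 + ((31*100+77)/((1*100+33)*100)) * b1 + ((31*100+77)/((1*100+33)*100)) * b2 + ((14*100+39)/(33*100+25)) * b3)^+2 + (((1*100+33))%N%:R/((10*100))%N%:R) * (a2 + ((31*100+77)/((1*100+33)*100)) * b0 + (- ((6*100+69)/(5*100+32))) * b1 + ((31*100+77)/((1*100+33)*100)) * b2 + ((14*100+39)/(33*100+25)) * b3)^+2 + ((67)%N%:R/((5*100))%N%:R) * (a3 + ((31*100+89)/((1*100+34)*100)) * b0 + ((31*100+89)/((1*100+34)*100)) * b1 + (- (((1*100+67)*100+87)/((1*100+34)*100))) * b2 + ((28*100+89)/(67*100)) * b3)^+2 + ((((((3*100+17)*100+28)*100+9)*100+67))%N%:R/((((((26*100+73)*100+30)*100)*100)*100))%N%:R) * (b0 + (- (((37*100+86)*100+29)/((((3*100+17)*100+28)*100+9)*100+67))) * b1 + (- (((49*100+70)*100+15)/((((3*100+17)*100+28)*100+9)*100+67))) * b2 + ((66*100+83)/(((9*100+73)*100+25)*100+45)) * b3)^+2 + ((((((((62*100+60)*100+38)*100+98)*100+42)*100+7)*100+31))%N%:R/(((((((((5*100+27)*100+47)*100+96)*100+7)*100+63)*100+75)*100)*100))%N%:R)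 * (b1 + (- ((5*100+35)/((34*100+11)*100+22))) * b2 + ((((1*100+8)*100+93)*100+29)/((((15*100+84)*100+51)*100+16)*100+90)) * b3)^+2 + ((((((10*100+28)*100+66)*100+83)*100+27))%N%:R/((((((85*100+28)*100+5)*100)*100)*100))%N%:R) * (b2 + ((((16*100+51)*100+14)*100+44)/((((51*100+43)*100+34)*100+16)*100+35)) * b3)^+2 + (((((((((1*100+56)*100+3)*100+80)*100+64)*100+3)*100+68)*100+83))%N%:R/(((((((((38*100+22)*100+53)*100+15)*100+3)*100+13)*100+20)*100)*100))%N%:R) * (b3)^+2 by field.
rewrite -subr_ge0 E.
repeat apply: addr_ge0.
all: by apply: mulr_ge0; [apply: divr_ge0; exact: ler0n | exact: sqr_ge0].
Qed.

Definition T3 : seq (seq R) :=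
  [:: [:: (((2*100+8)*100+30)/(10*100*100)); (((2*100+8)*100+30)/(10*100*100)); (((2*100+8)*100+30)/(10*100*100)); (((1*100+29)*100+28)/(10*100*100))];
      [:: (((1*100+67)*100+25)/(10*100*100)); (- ((31*100+77)/(10*100*100))); (- ((31*100+77)/(10*100*100))); (- ((57*100+56)/(10*100*100)))];
      [:: (- ((31*100+77)/(10*100*100))); (((1*100+67)*100+25)/(10*100*100)); (- ((31*100+77)/(10*100*100))); (- ((57*100+56)/(10*100*100)))];
      [:: (- ((31*100+89)/(10*100*100))); (- ((31*100+89)/(10*100*100))); (((1*100+67)*100+87)/(10*100*100)); (- ((57*100+78)/(10*100*100)))]].
Definition y3 : seq R := [:: ((6*100)/(10*100)); ((1*100+33)/(10*100)); ((1*100+33)/(10*100)); ((1*100+34)/(10*100))].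
Definition x3 : seq R := [:: ((2*100+99)/(10*100)); ((2*100+99)/(10*100)); ((2*100+99)/(10*100)); ((1*100+3)/(10*100))].

Definition Hyp (G : bigraph) :=
  schur_lt (F := R) G (c0 R) \/ schur_lt (F := R[i]) G (c0C R).

Lemma sqrt6_bounds : (Num.sqrt 6 : R) ^+ 2 = 6 /\ 0 <= (Num.sqrt 6 : R) /\ (Num.sqrt 6 : R) <= 3.
Proof.
have h : (Num.sqrt 6 : R) ^+ 2 = 6 by rewrite sqr_sqrtr.
have h0 : 0 <= (Num.sqrt 6 : R) by apply: sqrtr_ge0.
split=> //; split=> //; nra.
Qed.

Lemma c0_le_rat : c0 R <= (9 + 4 * (49/20)) / 15.
Proof.
have [h [h0 _]] := sqrt6_bounds.
rewrite /c0; set s := Num.sqrt 6 in h h0 *.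
have : s <= 49/20 by nra.
lra.
Qed.

Lemma Vref (s : R) : s ^+ 2 = 6 ->
  (9 + 4 * s) / 15 = let T := Tref s in
    nth 0 (nth [::] T 0) 0 + nth 0 (nth [::] T 0) 1 + nth 0 (nth [::] T 1) 0 +
    nth 0 (nth [::] T 1) 1 + nth 0 (nth [::] T 1) 2 + nth 0 (nth [::] T 2) 1.
Proof.
move=> hs; rewrite /Tref /=.
apply/eqP; rewrite -subr_eq0; apply/eqP.
have -> : forall x y : R, x - y = - (y - x) by move=> x y; ring.
apply/eqP; rewrite oppr_eq0; apply/eqP.
set V := (X in X - _).
have E : V - (9 + 4 * s) / 15 = (s ^+ 2 - 6) * (2/75 - (4/225) * s) by rewrite /V; field.
by rewrite E hs subrr mul0r.
Qed.

Lemma noB1 G : Hyp G -> has_pat G 3 3 M1 -> False.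
Proof.
move=> hy [rs [cs [[sr sc ur uc] [ar ac hM]]]].
have [hs [s0 s3]] := sqrt6_bounds.
apply: (inst_contra (yl := dref (Num.sqrt 6)) (xl := dref (Num.sqrt 6))
          (Tl := Tref (Num.sqrt 6)) sr sc ur uc ar ac hM _ _ _ _ _ _ hy).
- by case=> [[|[|[|k]]] hk] //=; lra.
- by case=> [[|[|[|k]]] hk] //=; lra.
- rewrite !big_ord_recl big_ord0 /=; lra.
- rewrite !big_ord_recl big_ord0 /=; lra.
- move=> a b; rewrite !big_ord_recl !big_ord0 /=.
  have := Pref (a ord0) (a (lift ord0 ord0)) (a (lift ord0 (lift ord0 ord0)))
     (b ord0) (b (lift ord0 ord0)) (b (lift ord0 (lift ord0 ord0))) hs s0 s3.
  lra.
- rewrite !big_ord_recl !big_ord0 /=.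
  have := Vref hs; rewrite /= /c0; lra.
Qed.

Lemma noB2 G : Hyp G -> has_pat G 3 3 M2 -> False.
Proof.
move=> hy [rs [cs [[sr sc ur uc] [ar ac hM]]]].
apply: (inst_contra (yl := y2) (xl := x2) (Tl := T2) sr sc ur uc ar ac hM _ _ _ _ _ _ hy).
- by case=> [[|[|[|k]]] hk] //=; lra.
- by case=> [[|[|[|k]]] hk] //=; lra.
- rewrite !big_ord_recl big_ord0 /=; lra.
- rewrite !big_ord_recl big_ord0 /=; lra.
- move=> a b; rewrite !big_ord_recl !big_ord0 /=.
  have := P2 (a ord0) (a (lift ord0 ord0)) (a (lift ord0 (lift ord0 ord0)))
     (b ord0) (b (lift ord0 ord0)) (b (lift ord0 (lift ord0 ord0))).
  lra.
- rewrite !big_ord_recl !big_ord0 /=.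
  have := c0_le_rat; lra.
Qed.

Lemma noB3 G : Hyp G -> has_pat G 4 4 M3 -> False.
Proof.
move=> hy [rs [cs [[sr sc ur uc] [ar ac hM]]]].
apply: (inst_contra (yl := y3) (xl := x3) (Tl := T3) sr sc ur uc ar ac hM _ _ _ _ _ _ hy).
- by case=> [[|[|[|[|k]]]] hk] //=; lra.
- by case=> [[|[|[|[|k]]]] hk] //=; lra.
- rewrite !big_ord_recl big_ord0 /=; lra.
- rewrite !big_ord_recl big_ord0 /=; lra.
- move=> a b; rewrite !big_ord_recl !big_ord0 /=.
  have := P3 (a ord0) (a (lift ord0 ord0)) (a (lift ord0 (lift ord0 ord0)))
     (a (lift ord0 (lift ord0 (lift ord0 ord0))))
     (b ord0) (b (lift ord0 ord0)) (b (lift ord0 (lift ord0 ord0)))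
     (b (lift ord0 (lift ord0 (lift ord0 ord0)))).
  lra.
- rewrite !big_ord_recl !big_ord0 /=.
  have := c0_le_rat; lra.
Qed.
End Gen.


Unset Implicit Arguments. Set Strict Implicit.

Theorem lemma6p5 (R : realType) (G : bigraph) :
  twin_free G ->
  (schur_lt (F := R) G (c0 R) \/ schur_lt (F := R[i]) G (c0C R)) ->
  ~ has_induced_H G /\ max_degree_le G 3.
Proof.
move=> tf hy.
have hyT : Hyp R (gT G).
  by case: hy => h; [left|right]; apply: schur_lt_T.
have tfT := twin_free_T tf.
have noH : ~ rowH G.
  by move=> h; case: (comb1 tf h) => [/(noB1 hy)|/(noB2 hy)].
have noHT : ~ rowH (gT G).
  by move=> h; case: (comb1 tfT h) => [/(noB1 hyT)|/(noB2 hyT)].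
split.
  by case=> h; [exact: noH h | exact: noHT h].
split.
  exact: (comb2 tf noH (noB3 hy)).
exact: (comb2 tfT noHT (noB3 hyT)).
Qed.
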